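(* Let $I \subset \mathbb{R}$ be an interval (open or closed), let $d$ be an orderly metric on $\mathbb{R}$, and let $f \colon (I,d) \to (\mathbb{R},d)$ be an $(M,\epsilon)$-quasi-isometric embedding. Then $f$ is $2\epsilon M$-monotone relative to $d$, and for all $a,b \in I$ the set $f([a,b])$ is $\epsilon$-dense in $[f(a),f(b)]$, i.e. $\inf_{x \in [a,b]} d(y,f(x)) \leq \epsilon$ for every $y \in [f(a),f(b)]$.
   Context: A map $f \colon (X,d) \to (Y,d')$ is an $(M,\epsilon)$-quasi-isometric embedding if $M^{-1}d(x,y) - \epsilon \leq d'(f(x),f(y)) \leq Md(x,y) + \epsilon$ for all $x,y \in X$. A metric $d$ on $\mathbb{R}$ is orderly if the identity $(\mathbb{R},|\cdot|) \to (\mathbb{R},d)$ is continuous and $\max\{d(x,y),d(y,z)\} \leq d(x,z)$ whenever $x \leq y \leq z$. For $E \subset \mathbb{R}$ and $\delta > 0$, a map $f \colon E \to \mathbb{R}$ is $\delta$-monotone relative to $d$ if either $f(a) < f(b)$ for all $a,b \in E$ with $a < b$ and $d(a,b) > \delta$, or $f(a) > f(b)$ for all such $a,b$. Here $[u,v] = \{x : u \leq x \leq v\}$. *)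

(* Defs.v *)
From Stdlib Require Import Reals.
Open Scope R_scope.

Definition is_metric (d : R -> R -> R) : Prop :=
  (forall x y, 0 <= d x y) /\
  (forall x y, d x y = 0 <-> x = y) /\
  (forall x y, d x y = d y x) /\
  (forall x y z, d x z <= d x y + d y z).

Definition orderly (d : R -> R -> R) : Prop :=
  is_metric d /\
  (forall x eps, 0 < eps ->
     exists delta, 0 < delta /\ forall y, Rabs (y - x) < delta -> d x y < eps) /\
  (forall x y z, x <= y -> y <= z -> Rmax (d x y) (d y z) <= d x z).

Definition open_or_closed_interval (I : R -> Prop) : Prop :=
  (forall x y z, I x -> I z -> x <= y -> y <= z -> I y) /\
  (open_set I \/ closed_set I).

Definition qi_embedding (d : R -> R -> R) (E : R -> Prop) (f : R -> R)
  (M eps : R) : Prop :=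
  forall x y, E x -> E y ->
    / M * d x y - eps <= d (f x) (f y) /\ d (f x) (f y) <= M * d x y + eps.

Definition delta_monotone (d : R -> R -> R) (E : R -> Prop) (f : R -> R)
  (delta : R) : Prop :=
  (forall a b, E a -> E b -> a < b -> d a b > delta -> f a < f b) \/
  (forall a b, E a -> E b -> a < b -> d a b > delta -> f a > f b).

(* Main.v *)
Require Import Defs.
From Stdlib Require Import Reals Lra Classical.
Open Scope R_scope.

Lemma core (h : R -> R) a b c : a <= b -> h a <= c -> c <= h b ->
  exists s, a <= s <= b /\ forall del, 0 < del -> exists w, a <= w <= b /\
    Rabs (w - s) < del /\ ((h s <= c <= h w) \/ (h w <= c <= h s)).
Proof.
  intros Hab Ha Hb.
  set (E := fun x => a <= x <= b /\ h x <= c).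
  assert (HB : bound E) by (exists b; intros x [[_ H] _]; exact H).
  assert (HE : exists x, E x) by (exists a; unfold E; repeat split; lra).
  destruct (completeness E HB HE) as [s [Hub Hlub]].
  assert (Has : a <= s) by (apply Hub; unfold E; repeat split; lra).
  assert (Hsb : s <= b) by (apply Hlub; intros x [[_ H] _]; exact H).
  exists s; split; [lra|]. intros del Hdel.
  destruct (Rle_dec (h s) c) as [Hs|Hs].
  - destruct (Req_dec s b) as [Heq|Hne].
    + exists b. subst s. split; [lra|]. split.
      * rewrite Rminus_diag, Rabs_R0; lra.
      * left; lra.
    + set (z := if Rle_dec b (s + del/2) then b else s + del/2).
      assert (Hz1 : s < z /\ z <= b /\ z - s <= del/2).
      { unfold z; destruct (Rle_dec b (s + del/2)); lra. }
      assert (Hz2 : ~ E z).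
      { intro Ez. pose proof (Hub z Ez). lra. }
      exists z. split; [lra|]. split.
      * apply Rabs_def1; lra.
      * left. split; [lra|]. destruct (Rle_dec (h z) c) as [Hc|Hc]; [|lra].
        exfalso; apply Hz2; unfold E; repeat split; lra.
  - assert (Hx : exists x, E x /\ s - del/2 < x).
    { apply NNPP; intro Hn.
      assert (Hu : is_upper_bound E (s - del/2)).
      { intros x Ex. destruct (Rle_dec x (s - del/2)) as [Hl|Hl]; [exact Hl|].
        exfalso; apply Hn; exists x; split; [exact Ex|lra]. }
      pose proof (Hlub _ Hu); lra. }
    destruct Hx as [x [Ex Hx]]. pose proof (Hub x Ex).
    destruct Ex as [Hx1 Hx2].
    exists x. split; [lra|]. split.
    + apply Rabs_def1; lra.
    + right; lra.
Qed.

Theorem lemma3p10 (d : R -> R -> R) (I : R -> Prop) (f : R -> R) (M eps : R) :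
  orderly d ->
  open_or_closed_interval I ->
  0 < M -> 0 <= eps ->
  qi_embedding d I f M eps ->
  delta_monotone d I f (2 * eps * M) /\
  (forall a b, I a -> I b -> a <= b ->
     forall y, f a <= y -> y <= f b ->
       (* inf_{x in [a,b]} d(y, f x) <= eps *)
       forall eta, eps < eta -> exists x, a <= x /\ x <= b /\ d y (f x) < eta).
Proof.
  intros [[Hpos [Hzero [Hsym Htri]]] [Hcont Hord]] [Hconv _] HM He Hqi.
  assert (dens : forall a b y eta, I a -> I b -> a <= b ->
     ((f a <= y <= f b) \/ (f b <= y <= f a)) -> eps < eta ->
     exists x, a <= x <= b /\ d y (f x) < eta).
  { intros a b y eta Ia Ib Hab Hy Heta.
    assert (Hc : exists s, a <= s <= b /\ forall del, 0 < del -> exists w, a <= w <= b /\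
      Rabs (w - s) < del /\ ((f s <= y <= f w) \/ (f w <= y <= f s))).
    { destruct Hy as [Hy|Hy].
      - apply core; lra.
      - destruct (core (fun x => - f x) a b (- y)) as [s [Hs Hw]]; try lra.
        exists s; split; [exact Hs|]. intros del Hdel.
        destruct (Hw del Hdel) as [w [Hw1 [Hw2 Hw3]]].
        exists w; split; [exact Hw1|]; split; [exact Hw2|]. lra. }
    destruct Hc as [s [Hs Hw]].
    set (e' := (eta - eps) / M).
    assert (He' : 0 < e') by (unfold e'; apply Rdiv_lt_0_compat; lra).
    destruct (Hcont s e' He') as [del [Hdel Hdel']].
    destruct (Hw del Hdel) as [w [Hw1 [Hw2 Hw3]]].
    assert (Is : I s) by (apply (Hconv a s b); tauto).
    assert (Iw : I w) by (apply (Hconv a w b); tauto).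
    pose proof (Hdel' w Hw2) as Hdsw.
    destruct (Hqi s w Is Iw) as [_ Hup].
    assert (M * d s w < M * e') by (apply Rmult_lt_compat_l; lra).
    assert (M * e' = eta - eps) by (unfold e'; field; lra).
    exists s; split; [exact Hs|].
    destruct Hw3 as [Hw3|Hw3].
    - pose proof (Hord (f s) y (f w) (proj1 Hw3) (proj2 Hw3)).
      pose proof (Rmax_l (d (f s) y) (d y (f w))).
      rewrite (Hsym y). lra.
    - pose proof (Hord (f w) y (f s) (proj1 Hw3) (proj2 Hw3)).
      pose proof (Rmax_r (d (f w) y) (d y (f s))).
      rewrite (Hsym (f w) (f s)) in *. lra.
  }
  split.
  2:{ intros a b Ia Ib Hab y H1 H2 eta Heta.
      destruct (dens a b y eta Ia Ib Hab (or_introl (conj H1 H2)) Heta) as [x [Hx Hx']].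
      exists x; repeat split; lra. }
  assert (Hinv : 0 < / M) by (apply Rinv_0_lt_compat; lra).
  assert (etaok : forall u v, d u v > 2 * eps * M -> eps < / M * d u v - eps).
  { intros u v Huv.
    assert (/ M * d u v > / M * (2 * eps * M)) by (apply Rmult_lt_compat_l; lra).
    assert (/ M * (2 * eps * M) = 2 * eps) by (field; lra). lra. }
  assert (H1 : forall x m t, I x -> I t -> x <= m -> m <= t ->
     d (f x) (f t) < / M * d x m - eps -> False).
  { intros x m t Ix It Hxm Hmt Hlt.
    destruct (Hqi x t Ix It) as [Hlo _].
    pose proof (Hord x m t Hxm Hmt). pose proof (Rmax_l (d x m) (d m t)).
    assert (/ M * d x m <= / M * d x t) by (apply Rmult_le_compat_l; lra). lra. }
  assert (H2 : forall t m z, I t -> I z -> t <= m -> m <= z ->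
     d (f z) (f t) < / M * d m z - eps -> False).
  { intros t m z It Iz Htm Hmz Hlt.
    destruct (Hqi z t Iz It) as [Hlo _].
    pose proof (Hord t m z Htm Hmz). pose proof (Rmax_r (d t m) (d m z)).
    rewrite (Hsym z t) in Hlo.
    assert (/ M * d m z <= / M * d t z) by (apply Rmult_le_compat_l; lra). lra. }
  assert (L : forall x y z, I x -> I y -> I z -> x < y -> x < z ->
     d x y > 2 * eps * M -> d x z > 2 * eps * M ->
     ((f y <= f x <= f z) \/ (f z <= f x <= f y)) -> False).
  { intros x y z Ix Iy Iz Hxy Hxz Dxy Dxz Hb.
    destruct (Rle_dec y z) as [Hyz|Hyz].
    - destruct (dens y z (f x) (/ M * d x y - eps) Iy Iz Hyz Hb (etaok _ _ Dxy))
        as [t [Ht Hd]].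
      apply (H1 x y t Ix (Hconv y t z Iy Iz (proj1 Ht) (proj2 Ht))); lra.
    - destruct (dens z y (f x) (/ M * d x z - eps) Iz Iy ltac:(lra)
        ltac:(tauto) (etaok _ _ Dxz)) as [t [Ht Hd]].
      apply (H1 x z t Ix (Hconv z t y Iz Iy (proj1 Ht) (proj2 Ht))); lra. }
  assert (R : forall x y z, I x -> I y -> I z -> x < z -> y < z ->
     d x z > 2 * eps * M -> d y z > 2 * eps * M ->
     ((f x <= f z <= f y) \/ (f y <= f z <= f x)) -> False).
  { intros x y z Ix Iy Iz Hxz Hyz Dxz Dyz Hb.
    destruct (Rle_dec x y) as [Hxy|Hxy].
    - destruct (dens x y (f z) (/ M * d y z - eps) Ix Iy Hxy Hb (etaok _ _ Dyz))
        as [t [Ht Hd]].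
      apply (H2 t y z (Hconv x t y Ix Iy (proj1 Ht) (proj2 Ht)) Iz); lra.
    - destruct (dens y x (f z) (/ M * d x z - eps) Iy Ix ltac:(lra)
        ltac:(tauto) (etaok _ _ Dxz)) as [t [Ht Hd]].
      apply (H2 t x z (Hconv y t x Iy Ix (proj1 Ht) (proj2 Ht)) Iz); lra. }
  assert (ne : forall u v, I u -> I v -> d u v > 2 * eps * M -> f u <> f v).
  { intros u v Iu Iv Duv Heq. destruct (Hqi u v Iu Iv) as [Hlo _].
    rewrite Heq in Hlo. assert (d (f v) (f v) = 0) by (apply Hzero; reflexivity).
    pose proof (etaok _ _ Duv). lra. }
  unfold delta_monotone.
  destruct (classic (forall a b, I a -> I b -> a < b -> d a b > 2 * eps * M -> f a < f b))
    as [Hinc|Hninc]; [left; exact Hinc|right].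
  apply not_all_ex_not in Hninc as [a0 Hn].
  apply not_all_ex_not in Hn as [b0 Hn].
  apply imply_to_and in Hn as [Ia0 Hn].
  apply imply_to_and in Hn as [Ib0 Hn].
  apply imply_to_and in Hn as [Hab0 Hn].
  apply imply_to_and in Hn as [Dab0 Hn].
  pose proof (ne a0 b0 Ia0 Ib0 Dab0).
  assert (Hba : f b0 < f a0) by lra.
  intros c e Ic Ie Hce Dce.
  set (m := Rmax b0 e).
  assert (Im : I m) by (unfold m; apply Rmax_case; assumption).
  assert (Hb0m : b0 <= m) by apply Rmax_l.
  assert (Hem : e <= m) by apply Rmax_r.
  assert (Dam : d a0 m > 2 * eps * M).
  { pose proof (Hord a0 b0 m ltac:(lra) Hb0m). pose proof (Rmax_l (d a0 b0) (d b0 m)). lra. }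
  assert (Dcm : d c m > 2 * eps * M).
  { pose proof (Hord c e m ltac:(lra) Hem). pose proof (Rmax_l (d c e) (d e m)). lra. }
  assert (Hma : f m < f a0).
  { destruct (Rlt_dec (f m) (f a0)) as [Hl|Hl]; [exact Hl|].
    exfalso; apply (L a0 b0 m Ia0 Ib0 Im); try lra. }
  assert (Hcm : f m < f c).
  { destruct (Rlt_dec (f m) (f c)) as [Hl|Hl]; [exact Hl|].
    exfalso; apply (R a0 c m Ia0 Ic Im); try lra. }
  destruct (Rlt_dec (f e) (f c)) as [Hl|Hl]; [lra|].
  exfalso; apply (L c e m Ic Ie Im); try lra.
Qed.
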